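(* Let $N \in \mathbb{N}$, let $\lambda > 0$, and let $f = (f_j)_{j=1}^N,\ g = (g_j)_{j=1}^N \in [-\pi,\pi)^N$. Define $v = (v_j)_{j=1}^N \in \mathbb{R}^N$ by \[ v_j := \begin{cases} 0 & \text{if } |g_j - f_j| \le \pi,\\ \operatorname{sgn}(g_j - f_j) & \text{if } |g_j - f_j| > \pi. \end{cases} \] Then \[ \operatorname*{argmin}_{x \in [-\pi,\pi)^N} \sum_{j=1}^N \Big( d(g_j,x_j)^2 + \lambda\, d(f_j,x_j)^2 \Big) = \left( \frac{g + \lambda f}{1+\lambda} + \frac{\lambda}{1+\lambda}\, 2\pi\, v \right)_{2\pi}, \] i.e. the minimum of $x \mapsto \sum_{j=1}^N \big( d(g_j,x_j)^2 + \lambda d(f_j,x_j)^2 \big)$ over $x \in [-\pi,\pi)^N$ is attained at the displayed point.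
   Context: For $t \in \mathbb{R}$, $(t)_{2\pi}$ denotes the unique point of $[-\pi,\pi)$ with $t - (t)_{2\pi} \in 2\pi\mathbb{Z}$; for a vector it is applied componentwise. Points of the unit circle $\mathbb{S}^1$ are represented by angles in $[-\pi,\pi)$, and for $a,b \in [-\pi,\pi)$ the geodesic (arc-length) distance on the circle is $d(a,b) := \min_{k \in \mathbb{Z}} |b - a + 2\pi k| = |(b-a)_{2\pi}|$. *)

(* Defs.v *)
From mathcomp Require Import all_boot all_order all_algebra.
From mathcomp Require Import all_classical all_reals all_analysis.
Set Implicit Arguments. Unset Strict Implicit. Unset Printing Implicit Defensive.
Import Order.TTheory GRing.Theory Num.Theory.
Local Open Scope ring_scope.

(* (t)_{2pi}: the unique point of [-pi,pi) congruent to t modulo 2pi *)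
Definition wrap2pi (R : realType) (t : R) : R :=
  t - 2 * pi * (Num.floor ((t + pi) / (2 * pi)))%:~R.

Definition circ_dist (R : realType) (a b : R) : R := `|wrap2pi (b - a)|.

Definition objective (R : realType) (N : nat) (lambda : R)
  (f g x : 'I_N -> R) : R :=
  \sum_(j < N) (circ_dist (g j) (x j) ^+ 2 + lambda * circ_dist (f j) (x j) ^+ 2).

Definition vshift (R : realType) (N : nat) (f g : 'I_N -> R) (j : 'I_N) : R :=
  if `|g j - f j| <= pi then 0 else Num.sg (g j - f j).

Definition candidate (R : realType) (N : nat) (lambda : R) (f g : 'I_N -> R)
  (j : 'I_N) : R :=
  wrap2pi ((g j + lambda * f j) / (1 + lambda)
           + lambda / (1 + lambda) * (2 * pi) * vshift f g j).

Definition in_box (R : realType) (N : nat) (x : 'I_N -> R) : Prop :=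
  forall j, - pi <= x j < pi.

(* Main.v *)
Require Import Defs.
From mathcomp Require Import all_boot all_order all_algebra.
From mathcomp Require Import all_classical all_reals all_analysis.
From mathcomp Require Import ring lra zify.
Import Order.TTheory GRing.Theory Num.Theory.
Local Open Scope ring_scope.

Section S.
Context {R : realType}.
Implicit Types s t a b c : R.
Lemma L (s : R) (n : int) : `|s| <= pi -> `|s| <= `|s + 2 * pi * n%:~R|.
Proof.
move=> hs; have [->|nz] := eqVneq n 0; first by rewrite mulr0 addr0.
have h1 : 1 <= `|n%:~R : R|.
  rewrite -intr_norm ler1z; lia.
have hp := pi_gt0 R.
have h2 : 2 * pi <= `|2 * pi * n%:~R : R|.
  rewrite normrM gtr0_norm; last lra.
  have h3 : 2 * pi * 1 <= 2 * pi * `|n%:~R : R| by rewrite ler_wpM2l //; lra.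
  lra.
have := lerB_normD (2 * pi * n%:~R) s; rewrite [_ + s]addrC; lra.
Qed.

Lemma wrap_bound t : - pi <= wrap2pi t < pi.
Proof.
have hp := pi_gt0 R.
rewrite /wrap2pi; set k := Num.floor _.
have /andP[h1 h2] := floor_itv ((t + pi) / (2 * pi)); rewrite -/k in h1 h2.
rewrite ler_pdivlMr in h1; last lra.
rewrite ltr_pdivrMr in h2; last lra.
rewrite intrD in h2.
apply/andP; split; lra.
Qed.

Lemma wrap_shift t : exists k : int, wrap2pi t = t + 2 * pi * k%:~R.
Proof. by exists (- Num.floor ((t + pi) / (2 * pi))); rewrite intrN mulrN. Qed.

Lemma wrap_le_pi t : `|wrap2pi t| <= pi.
Proof. have := wrap_bound t; have := pi_gt0 R; move=> ? /andP[? ?]; rewrite ler_norml; apply/andP; split; lra. Qed.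

Lemma wrap_min t (n : int) : `|wrap2pi t| <= `|t + 2 * pi * n%:~R|.
Proof.
have [k hk] := wrap_shift t.
have -> : t + 2 * pi * n%:~R = wrap2pi t + 2 * pi * (n - k)%:~R.
  by rewrite hk intrB; ring.
exact/L/wrap_le_pi.
Qed.

Lemma cd_tri a b c : circ_dist a b <= circ_dist a c + circ_dist c b.
Proof.
rewrite /circ_dist.
have [k1 h1] := wrap_shift (c - a); have [k2 h2] := wrap_shift (b - c).
apply: (le_trans (wrap_min _ (k1 + k2))).
have -> : b - a + 2 * pi * (k1 + k2)%:~R = wrap2pi (c - a) + wrap2pi (b - c).
  by rewrite h1 h2 intrD; ring.
exact: ler_normD.
Qed.

Lemma cd_sym_le a b : circ_dist a b <= circ_dist b a.
Proof.
rewrite /circ_dist; have [k h] := wrap_shift (a - b).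
apply: (le_trans (wrap_min _ (- k))).
have -> : b - a + 2 * pi * (- k)%:~R = - wrap2pi (a - b) by rewrite h intrN; ring.
by rewrite normrN.
Qed.

Lemma cd_sym a b : circ_dist a b = circ_dist b a.
Proof. by apply/le_anti; rewrite !cd_sym_le. Qed.

Lemma coord (lam f g x : R) (v : int) : 0 < lam -> `|f + 2 * pi * v%:~R - g| <= pi ->
  let c := wrap2pi ((g + lam * f) / (1 + lam) + lam / (1 + lam) * (2 * pi) * v%:~R) in
  circ_dist g c ^+ 2 + lam * circ_dist f c ^+ 2 <=
  circ_dist g x ^+ 2 + lam * circ_dist f x ^+ 2.
Proof.
move=> hl hA /=; set c := wrap2pi _.
set A := `|f + 2 * pi * v%:~R - g|.
have hAD : A <= circ_dist g f.
  have [k0 h0] := wrap_shift (f - g); rewrite /circ_dist h0.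
  have -> : f - g + 2 * pi * k0%:~R = (f + 2 * pi * v%:~R - g) + 2 * pi * (k0 - v)%:~R.
    by rewrite intrB; ring.
  exact: L.
have hab : circ_dist g f <= circ_dist g x + circ_dist f x.
  by rewrite (cd_sym f x); apply: cd_tri.
have [k hk] := wrap_shift ((g + lam * f) / (1 + lam) + lam / (1 + lam) * (2 * pi) * v%:~R).
rewrite -/c in hk.
have hl1 : 1 + lam != 0 by rewrite gt_eqF //; lra.
have n1 : `|1 + lam| = 1 + lam by apply: gtr0_norm; lra.
have n2 : `|lam| = lam by apply: gtr0_norm.
have hp : (1 + lam) * circ_dist g c <= lam * A.
  have h1 : circ_dist g c <= `|c - g + 2 * pi * (- k)%:~R| by apply: wrap_min.
  have e : (1 + lam) * (c - g + 2 * pi * (- k)%:~R) = lam * (f + 2 * pi * v%:~R - g).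
    rewrite hk intrN; field; done.
  have := e; move/(congr1 (fun z => `|z|)); rewrite !normrM n1 n2.
  move=> e2; rewrite /A -e2 ler_wpM2l //; lra.
have hq : (1 + lam) * circ_dist f c <= A.
  have h1 : circ_dist f c <= `|c - f + 2 * pi * (- k - v)%:~R| by apply: wrap_min.
  have e : (1 + lam) * (c - f + 2 * pi * (- k - v)%:~R) = - (f + 2 * pi * v%:~R - g).
    rewrite hk intrB intrN; field; done.
  have := e; move/(congr1 (fun z => `|z|)); rewrite normrN normrM n1.
  move=> e2; rewrite /A -e2 ler_wpM2l //; lra.
set p := circ_dist g c in hp *; set q := circ_dist f c in hq *.
set a := circ_dist g x in hab *; set b := circ_dist f x in hab *.
have p0 : 0 <= p by apply: normr_ge0.
have q0 : 0 <= q by apply: normr_ge0.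
have a0 : 0 <= a by apply: normr_ge0.
have b0 : 0 <= b by apply: normr_ge0.
have A0 : 0 <= A by apply: normr_ge0.
have S1 : ((1 + lam) * p) ^+ 2 <= (lam * A) ^+ 2 by rewrite lerXn2r // ?nnegrE; nra.
have S2 : ((1 + lam) * q) ^+ 2 <= A ^+ 2 by rewrite lerXn2r // ?nnegrE; nra.
have S3 : A ^+ 2 <= (a + b) ^+ 2 by rewrite lerXn2r // ?nnegrE; lra.
have S4 : 0 <= (a - lam * b) ^+ 2 by apply: sqr_ge0.
have hl2 : 0 < (1 + lam) ^+ 2 by apply: exprn_gt0; lra.
rewrite -(ler_pM2l hl2).
have S5 : lam * A ^+ 2 <= lam * (a + b) ^+ 2 by rewrite ler_wpM2l //; lra.
nra.
Qed.

Lemma vshift_ok (f g : R) : - pi <= f < pi -> - pi <= g < pi ->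
  exists v : int, (if `|g - f| <= pi then 0 else Num.sg (g - f)) = v%:~R /\
    `|f + 2 * pi * v%:~R - g| <= pi.
Proof.
move=> /andP[f1 f2] /andP[g1 g2]; have hp := pi_gt0 R.
case: ifP => h.
  exists 0; split => //; rewrite mulr0 addr0 distrC //.
have h' : pi < `|g - f| by rewrite ltNge h.
have [gt|le] := ltrP 0 (g - f).
  exists 1; rewrite gtr0_sg //; split => //.
  rewrite gtr0_norm // in h'; rewrite ler_norml; apply/andP; split; lra.
have lt : g - f < 0.
  rewrite lt_neqAle le andbT; apply/eqP => e; rewrite e normr0 in h'; lra.
exists (-1); rewrite ltr0_sg //; split => //.
rewrite ltr0_norm // in h'; rewrite ler_norml; apply/andP; split; lra.
Qed.
End S.

Theorem theorem2 (R : realType) (N : nat) (lambda : R) (f g : 'I_N -> R) :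
  0 < lambda -> in_box f -> in_box g ->
  in_box (candidate lambda f g) /\
  (forall x : 'I_N -> R, in_box x ->
     objective lambda f g (candidate lambda f g) <= objective lambda f g x).
Proof.
move=> hl hf hg; split.
  by move=> j; apply: wrap_bound.
move=> x _; rewrite /objective; apply: ler_sum => j _.
have [v [hv hA]] := @vshift_ok _ (f j) (g j) (hf j) (hg j).
rewrite /candidate /vshift hv.
exact: coord.
Qed.
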